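(* Let $\mathfrak{A}$ be an atomic weakly associative relation algebra and let $\mathfrak{B}$ be its suitable structure. Then $\mathfrak{Cm}\,\mathfrak{B}$ satisfies the merry-go-round identities MGR$_n$ for all $2\le n<\omega$; in particular, for every $X\subseteq B$ and all $\kappa,\lambda,\mu$ with $\{\kappa,\lambda,\mu\}=\{0,1,2\}$, $$T^*_\kappa(E_{\kappa\lambda}\cap T^*_\lambda(E_{\lambda\mu}\cap T^*_\mu(E_{\mu\kappa}\cap T^*_\kappa X)))=T^*_\kappa(E_{\kappa\mu}\cap T^*_\mu(E_{\mu\lambda}\cap T^*_\lambda(E_{\lambda\kappa}\cap T^*_\kappa X))).$$
   Context: WA: algebras $\langle A,+,\overline{\phantom{x}},;,\breve{\phantom{x}},1'\rangle$ with $x\cdot y=\overline{\overline{x}+\overline{y}}$, $0'=\overline{1'}$, $1=1'+0'$, $0=\overline{1}$, satisfying for all $x,y,z$: $x+y=y+x$; $x+(y+z)=(x+y)+z$; $\overline{\overline{x}+\overline{y}}+\overline{\overline{x}+y}=x$; $((x\cdot 1');1);1=(x\cdot1');1$; $(x+y);z=x;z+y;z$; $x;1'=x$; $\breve{\breve{x}}=x$; $\breve{(x+y)}=\breve{x}+\breve{y}$; $\breve{(x;y)}=\breve{y};\breve{x}$; $\breve{x};\overline{x;y}+\overline{y}=\overline{y}$. Suitable structure: $B=\{s\in{}^3\mathrm{At}(\mathfrak{A}): s_2;s_0\ge s_1\}$; $T_\kappa=\{\langle s,t\rangle\in B\times B:s_\kappa=t_\kappa\}$; $E_{\kappa\kappa}=B$;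 for distinct $\kappa,\lambda$ with third index $\mu$, $E_{\kappa\lambda}=\{s\in B:s_\mu\le1'\}$. $\mathfrak{Cm}\,\mathfrak{B}=\langle\mathcal{P}(B),\cup,\cap,B\setminus\cdot,\emptyset,B,T_\kappa^*,E_{\kappa\lambda}\rangle_{\kappa,\lambda<3}$, $T_\kappa^*(X)=\{y\in B:\exists x\in X\ \langle y,x\rangle\in T_\kappa\}$, with $c_\kappa=T^*_\kappa$, $d_{\kappa\lambda}=E_{\kappa\lambda}$, $\cdot=\cap$. Merry-go-round identities: with $s^\kappa_\lambda x=c_\kappa(d_{\kappa\lambda}\cdot x)$ for $\kappa\ne\lambda$, MGR$_n$ is the set of identities $s^\lambda_{\kappa_1}s^{\kappa_1}_{\kappa_2}\cdots s^{\kappa_{n-1}}_{\kappa_n}s^{\kappa_n}_\lambda c_\lambda x=s^\lambda_{\kappa_n}s^{\kappa_n}_{\kappa_1}s^{\kappa_1}_{\kappa_2}\cdots s^{\kappa_{n-2}}_{\kappa_{n-1}}s^{\kappa_{n-1}}_\lambda c_\lambda x$ for distinct $\lambda,\kappa_1,\dots,\kappa_n<3$ (vacuous when $n\ge3$). *)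

(* Defs.v *)
From mathcomp Require Import all_boot.
Set Implicit Arguments. Unset Strict Implicit. Unset Printing Implicit Defensive.

Record WA := {
  wa_car :> Type;
  wa_add : wa_car -> wa_car -> wa_car;
  wa_compl : wa_car -> wa_car;
  wa_comp : wa_car -> wa_car -> wa_car;
  wa_conv : wa_car -> wa_car;
  wa_id : wa_car }.

Section Ops.
Variable A : WA.
Definition wa_mul (x y : A) : A := wa_compl (wa_add (wa_compl x) (wa_compl y)).
Definition wa_diw : A := wa_compl (wa_id A).
Definition wa_top : A := wa_add (wa_id A) wa_diw.
Definition wa_bot : A := wa_compl wa_top.
Definition wa_le (x y : A) : Prop := wa_add x y = y.

Definition is_WA : Prop :=
  (forall x y : A, wa_add x y = wa_add y x) /\
      (forall x y z : A, wa_add x (wa_add y z) = wa_add (wa_add x y) z) /\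
      (forall x y : A, wa_add (wa_compl (wa_add (wa_compl x) (wa_compl y)))
                              (wa_compl (wa_add (wa_compl x) y)) = x) /\
      (forall x : A, wa_comp (wa_comp (wa_mul x (wa_id A)) wa_top) wa_top
                     = wa_comp (wa_mul x (wa_id A)) wa_top) /\
      (forall x y z : A, wa_comp (wa_add x y) z = wa_add (wa_comp x z) (wa_comp y z)) /\
      (forall x : A, wa_comp x (wa_id A) = x) /\
      (forall x : A, wa_conv (wa_conv x) = x) /\
      (forall x y : A, wa_conv (wa_add x y) = wa_add (wa_conv x) (wa_conv y)) /\
      (forall x y : A, wa_conv (wa_comp x y) = wa_comp (wa_conv y) (wa_conv x)) /\
      (forall x y : A, wa_add (wa_comp (wa_conv x) (wa_compl (wa_comp x y))) (wa_compl y)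
                       = wa_compl y).

Definition is_atom (a : A) : Prop :=
  a <> wa_bot /\ forall b : A, wa_le b a -> b = wa_bot \/ b = a.

Definition atomic : Prop :=
  forall x : A, x <> wa_bot -> exists2 a, is_atom a & wa_le a x.

Definition triple := 'I_3 -> A.
Definition i0 : 'I_3 := @Ordinal 3 0 isT.
Definition i1 : 'I_3 := @Ordinal 3 1 isT.
Definition i2 : 'I_3 := @Ordinal 3 2 isT.

Definition inB (s : triple) : Prop :=
  (forall i, is_atom (s i)) /\ wa_le (s i1) (wa_comp (s i2) (s i0)).

Definition Tstar (k : 'I_3) (X : triple -> Prop) : triple -> Prop :=
  fun y => inB y /\ exists x, X x /\ inB x /\ y k = x k.

(* E_kk = B; for k <> l with third index m, E_kl = { s in B : s_m <= 1' } *)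
Definition Ediag (k l : 'I_3) : triple -> Prop :=
  fun s => inB s /\
    (k = l \/ forall m : 'I_3, m <> k -> m <> l -> wa_le (s m) (wa_id A)).

Definition capB (X Y : triple -> Prop) : triple -> Prop := fun s => X s /\ Y s.
End Ops.

(* Main.v *)
Set Warnings "-notation-overridden".
Require Import Defs.
From mathcomp Require Import all_boot.
Set Implicit Arguments. Unset Strict Implicit. Unset Printing Implicit Defensive.

Section WAfacts.
Variable A : WA.
Hypothesis HA : is_WA A.

Local Notation ad := (@wa_add A).
Local Notation cp := (@wa_compl A).
Local Notation cm := (@wa_comp A).
Local Notation cv := (@wa_conv A).
Local Notation id1 := (@wa_id A).
Local Notation le := (@wa_le A).
Local Notation bot := (@wa_bot A).
Local Notation top := (@wa_top A).

Lemma addC (x y : A) : ad x y = ad y x. Proof. by case: HA. Qed.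
Lemma addA (x y z : A) : ad x (ad y z) = ad (ad x y) z. Proof. by case: HA => _ []. Qed.
Lemma hunt (x y : A) : ad (cp (ad (cp x) (cp y))) (cp (ad (cp x) y)) = x.
Proof. by case: HA => _ [] _ []. Qed.
Lemma compDl (x y z : A) : cm (ad x y) z = ad (cm x z) (cm y z).
Proof. by case: HA => _ [] _ [] _ [] _ []. Qed.
Lemma comp1 (x : A) : cm x id1 = x.
Proof. by case: HA => _ [] _ [] _ [] _ [] _ []. Qed.
Lemma convK (x : A) : cv (cv x) = x.
Proof. by case: HA => _ [] _ [] _ [] _ [] _ [] _ []. Qed.
Lemma convD (x y : A) : cv (ad x y) = ad (cv x) (cv y).
Proof. by case: HA => _ [] _ [] _ [] _ [] _ [] _ [] _ []. Qed.
Lemma convM (x y : A) : cv (cm x y) = cm (cv y) (cv x).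
Proof. by case: HA => _ [] _ [] _ [] _ [] _ [] _ [] _ [] _ []. Qed.
Lemma cycle (x y : A) : ad (cm (cv x) (cp (cm x y))) (cp y) = cp y.
Proof. by case: HA => _ [] _ [] _ [] _ [] _ [] _ [] _ [] _ []. Qed.

Lemma addCA (x y z : A) : ad x (ad y z) = ad y (ad x z).
Proof. by rewrite addA (addC x y) -addA. Qed.
Lemma addAC (x y z : A) : ad (ad x y) z = ad (ad x z) y.
Proof. by rewrite -addA (addC y z) addA. Qed.
Lemma addACA (x y z w : A) : ad (ad x y) (ad z w) = ad (ad x z) (ad y w).
Proof. by rewrite -!addA (addCA y). Qed.

Lemma L1 (x : A) : ad x (cp x) = ad (cp x) (cp (cp x)).
Proof.
set x1 := cp x; set x2 := cp x1; set x3 := cp x2.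
have hA : ad (cp (ad x2 x2)) (cp (ad x2 x1)) = x1 by exact: (hunt x1 x1).
have hB : ad (cp (ad x3 x2)) (cp (ad x3 x1)) = x2 by exact: (hunt x2 x1).
have hC : ad (cp (ad x2 x3)) (cp (ad x2 x2)) = x1 by exact: (hunt x1 x2).
have hD : ad (cp (ad x1 x3)) (cp (ad x1 x2)) = x by exact: (hunt x x2).
have e1 : ad x1 x2 = ad (ad (cp (ad x2 x2)) (cp (ad x2 x1))) (ad (cp (ad x3 x2)) (cp (ad x3 x1))).
  by rewrite hA hB.
rewrite e1 -{1}hC -{1}hD addC addACA (addC x2 x1) (addC x3 x2) (addC x3 x1).
by rewrite addC.
Qed.

Lemma L2 (x : A) : cp (cp x) = x.
Proof.
have h1 : ad (cp (cp (cp x))) (cp (cp x)) = ad (cp x) (cp (cp x)).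
  by rewrite addC -(L1 (cp x)).
have := hunt (cp (cp x)) (cp x).
rewrite h1 (addC (cp (cp (cp x))) (cp x)) addC => <-.
exact: hunt x (cp (cp x)).
Qed.

Lemma L3 (x y : A) : ad x (cp x) = ad y (cp y).
Proof.
have hx := hunt x y.
have hx' := hunt (cp x) y; rewrite L2 in hx'.
have hy := hunt y x.
have hy' := hunt (cp y) x; rewrite L2 in hy'.
have E : ad (ad (cp (ad (cp x) (cp y))) (cp (ad (cp x) y)))
            (ad (cp (ad x (cp y))) (cp (ad x y))) =
         ad (ad (cp (ad (cp y) (cp x))) (cp (ad (cp y) x)))
            (ad (cp (ad y (cp x))) (cp (ad y x))).
  rewrite (addC (cp y) (cp x)) (addC (cp y) x) (addC y (cp x)) (addC y x).
  by rewrite addACA (addC (cp (ad (cp x) y))).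
by rewrite hx hx' hy hy' in E.
Qed.

Lemma top_def (x : A) : ad x (cp x) = top.
Proof. exact: L3. Qed.

Lemma bot_def (x : A) : cp (ad x (cp x)) = bot.
Proof. by rewrite top_def. Qed.

Lemma add_top' (x : A) : ad (cp x) top = top.
Proof.
have B0 : cp (ad (cp x) x) = bot by rewrite -{2}(L2 x) bot_def.
have F := hunt x x; rewrite B0 in F.
have e : ad (ad (cp (ad (cp x) (cp x))) (cp (cp (ad (cp x) (cp x))))) bot
         = ad (cp x) (ad x (cp x)).
  by rewrite (L2 (ad (cp x) (cp x))) addAC F addCA.
by rewrite top_def /wa_bot top_def in e; rewrite -{1}(top_def x) -e.
Qed.

Lemma add_top (z : A) : ad z top = top.
Proof. by rewrite -(L2 z) add_top'. Qed.

Lemma F1 (x : A) : ad (cp (ad (cp x) (cp x))) bot = x.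
Proof.
have B0 : cp (ad (cp x) x) = bot by rewrite -{2}(L2 x) bot_def.
by have F := hunt x x; rewrite B0 in F.
Qed.

Lemma cp_top : cp top = bot. Proof. by []. Qed.
Lemma cp_bot : cp bot = top. Proof. by rewrite /wa_bot L2. Qed.

Lemma bot_bot : ad bot bot = bot.
Proof. by have := F1 bot; rewrite cp_bot add_top cp_top. Qed.

Lemma bot_add (z : A) : ad bot z = z.
Proof. by rewrite -(F1 z) addCA bot_bot. Qed.

Lemma add_bot (z : A) : ad z bot = z.
Proof. by rewrite addC bot_add. Qed.

Lemma cp_inj (x y : A) : cp x = cp y -> x = y.
Proof. by move=> e; rewrite -(L2 x) e L2. Qed.

Lemma addxx (x : A) : ad x x = x.
Proof.
have h := F1 (cp x); rewrite add_bot !L2 in h.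
exact: cp_inj.
Qed.

Lemma le_refl (x : A) : le x x. Proof. exact: addxx. Qed.
Lemma le_trans (x y z : A) : le x y -> le y z -> le x z.
Proof. by rewrite /wa_le => h1 h2; rewrite -h2 addA h1. Qed.
Lemma le_anti (x y : A) : le x y -> le y x -> x = y.
Proof. by rewrite /wa_le => h1 h2; rewrite -h1 -{1}h2 addC. Qed.
Lemma bot_le (x : A) : le bot x. Proof. exact: bot_add. Qed.

Lemma mul_le_l (x y : A) : le (wa_mul x y) x.
Proof.
rewrite /wa_le /wa_mul -{2 3}(hunt x y) addA addxx.
by rewrite hunt.
Qed.

Lemma mulC (x y : A) : wa_mul x y = wa_mul y x.
Proof. by rewrite /wa_mul addC. Qed.

Lemma atom_dich (y w : A) : is_atom y -> le y w \/ le y (cp w).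
Proof.
case=> _ Hy; case: (Hy _ (mul_le_l y w)) => h.
- right. have e := hunt y w. rewrite -/(wa_mul y w) h bot_add in e.
  rewrite -e -{1}(L2 w); change (le (wa_mul y (cp w)) (cp w)); rewrite mulC; exact: mul_le_l.
- left; rewrite -h mulC; exact: mul_le_l.
Qed.

Lemma le_cp_self (z : A) : le z (cp z) -> z = bot.
Proof. by rewrite /wa_le top_def => h; rewrite -(L2 z) -h. Qed.

Lemma comp_monol (x y z : A) : le x y -> le (cm x z) (cm y z).
Proof. by rewrite /wa_le => h; rewrite -compDl h. Qed.
Lemma conv_mono (x y : A) : le x y -> le (cv x) (cv y).
Proof. by rewrite /wa_le => h; rewrite -convD h. Qed.
Lemma conv_mono' (x y : A) : le (cv x) (cv y) -> le x y.
Proof. by move=> /conv_mono; rewrite !convK. Qed.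
Lemma comp_monor (x y z : A) : le x y -> le (cm z x) (cm z y).
Proof.
move=> h; apply: conv_mono'; rewrite !convM.
by apply: comp_monol; apply: conv_mono.
Qed.

Lemma convE1 (y : A) : cv y = cm (cv id1) (cv y).
Proof. by rewrite -convM comp1. Qed.
Lemma conv_id : cv id1 = id1.
Proof. by have := convE1 (cv id1); rewrite !convK comp1. Qed.
Lemma id_comp (y : A) : cm id1 y = y.
Proof. by have := convE1 (cv y); rewrite !convK conv_id. Qed.

Lemma cv_bot : cv bot = bot.
Proof.
apply: le_anti; last exact: bot_le.
by rewrite -{2}(convK bot); apply: conv_mono; apply: bot_le.
Qed.

Lemma cv_inj (x y : A) : cv x = cv y -> x = y.
Proof. by move=> e; rewrite -(convK x) e convK. Qed.

Lemma conv_atom (a : A) : is_atom a -> is_atom (cv a).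
Proof.
case=> Ha Hb; split.
  by move=> e; apply: Ha; rewrite -(convK a) e cv_bot.
move=> b hb; have hb' : le (cv b) a by rewrite -(convK a); apply: conv_mono.
case: (Hb _ hb') => e.
  by left; rewrite -(convK b) e cv_bot.
by right; rewrite -e convK.
Qed.

Lemma atom_le_eq (a b : A) : is_atom a -> is_atom b -> le a b -> a = b.
Proof. by case=> Ha _ [_ Hb] h; case: (Hb _ h). Qed.

Lemma P1 (x y z : A) : le z (cm x y) -> z <> bot -> is_atom y ->
  le y (cm (cv x) z).
Proof.
move=> hz nz ay; case: (atom_dich (cm (cv x) z) ay) => // h.
exfalso; apply: nz; apply: le_cp_self; apply: (le_trans hz).
apply: (le_trans (comp_monor x h)).
by have := cycle (cv x) z; rewrite convK.
Qed.

Definition idat (e : A) := is_atom e /\ le e id1.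

Lemma idat_cv (e : A) : idat e -> idat (cv e).
Proof.
case=> ae le1; split; first exact: conv_atom.
by rewrite -conv_id; apply: conv_mono.
Qed.

Lemma ord3 (i : 'I_3) : i = i0 \/ i = i1 \/ i = i2.
Proof.
case: i => [[|[|[|n]]] H].
- by left; apply: val_inj.
- by right; left; apply: val_inj.
- by right; right; apply: val_inj.
- by [].
Qed.

Lemma e01 : (i0 == i1) = false. Proof. by []. Qed.
Lemma e02 : (i0 == i2) = false. Proof. by []. Qed.
Lemma e10 : (i1 == i0) = false. Proof. by []. Qed.
Lemma e12 : (i1 == i2) = false. Proof. by []. Qed.
Lemma e20 : (i2 == i0) = false. Proof. by []. Qed.
Lemma e21 : (i2 == i1) = false. Proof. by []. Qed.
Lemma eii (i : 'I_3) : (i == i) = true. Proof. exact: eqxx. Qed.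

Lemma inB_ext (s t : triple A) : (forall i, s i = t i) -> inB s -> inB t.
Proof.
move=> e [h1 h2]; split; first by move=> i; rewrite -e.
by rewrite -!e.
Qed.

Lemma inB_atom (s : triple A) i : inB s -> is_atom (s i).
Proof. by case=> h _; apply: h. Qed.

Lemma T0 (s : triple A) : inB s -> idat (s i0) -> s i1 = s i2.
Proof.
move=> hs [_ h]; apply: atom_le_eq; try exact: inB_atom hs.
apply: (le_trans hs.2); rewrite -{2}(comp1 (s i2)); exact: comp_monor.
Qed.

Lemma T2 (s : triple A) : inB s -> idat (s i2) -> s i1 = s i0.
Proof.
move=> hs [_ h]; apply: atom_le_eq; try exact: inB_atom hs.
apply: (le_trans hs.2); rewrite -{2}(id_comp (s i0)); exact: comp_monol.
Qed.

Lemma T1 (s : triple A) : inB s -> idat (s i1) -> s i0 = cv (s i2).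
Proof.
move=> hs [_ h]; apply: atom_le_eq; try exact: inB_atom hs.
  by apply: conv_atom; exact: inB_atom hs.
have := P1 hs.2 (inB_atom i1 hs).1 (inB_atom i0 hs) => h1.
apply: (le_trans h1); rewrite -{2}(comp1 (cv (s i2))); exact: comp_monor.
Qed.

Definition other (p : 'I_3) (v : A) := if p == i1 then cv v else v.
Definition mk (p q : 'I_3) (v e : A) : triple A :=
  fun i => if i == p then e else if i == q then v else other p v.
Definition condp (p q : 'I_3) (v : A) := exists e, idat e /\ inB (mk p q v e).

Lemma third (p q r i : 'I_3) : q <> p -> r <> p -> r <> q -> i <> p -> i <> q -> i = r.
Proof.
have [->|[->|->]] := ord3 p; have [->|[->|->]] := ord3 q;
have [->|[->|->]] := ord3 r; have [->|[->|->]] := ord3 i; congruence.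
Qed.

Lemma F_val (s : triple A) (p q r : 'I_3) : inB s -> idat (s p) ->
  q <> p -> r <> p -> r <> q -> s r = other p (s q).
Proof.
move=> hs hp.
have [ep|[ep|ep]] := ord3 p; have [->|[->|->]] := ord3 q;
have [->|[->|->]] := ord3 r; rewrite ep in hp *; rewrite /other ?eii ?e01 ?e21 //;
  try congruence.
- by move=> _ _ _; rewrite (T0 hs hp).
- by move=> _ _ _; rewrite (T0 hs hp).
- by move=> _ _ _; rewrite (T1 hs hp) convK.
- by move=> _ _ _; rewrite (T1 hs hp).
- by move=> _ _ _; rewrite (T2 hs hp).
- by move=> _ _ _; rewrite (T2 hs hp).
Qed.

Lemma F (s : triple A) (p q r : 'I_3) : inB s -> idat (s p) ->
  q <> p -> r <> p -> r <> q -> s r = other p (s q) /\ condp p q (s q).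
Proof.
move=> hs hp qp rp rq; have ev := F_val hs hp qp rp rq; split => //.
exists (s p); split => //; apply: (inB_ext _ hs) => i; rewrite /mk.
case: eqP => [->//|ip]; case: eqP => [->//|iq].
by rewrite (third qp rp rq ip iq).
Qed.

Lemma mk_p p q v e : mk p q v e p = e.
Proof. by rewrite /mk eqxx. Qed.
Lemma mk_q p q v e : q <> p -> mk p q v e q = v.
Proof. by move=> qp; rewrite /mk eqxx; case: eqP. Qed.
Lemma mk_r p q r v e : r <> p -> r <> q -> mk p q v e r = other p v.
Proof. by move=> rp rq; rewrite /mk; case: eqP => // _; case: eqP. Qed.

Definition Gchar (X : triple A -> Prop) (k l m : 'I_3) (s : triple A) :=
  inB s /\ condp m k (s k) /\ condp k l (other m (s k)) /\
  condp l m (other k (other m (s k))) /\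
  exists x, X x /\ inB x /\ x k = other l (other k (other m (s k))).

Lemma Ediag_id (k l m : 'I_3) (t : triple A) : k <> l -> l <> m -> k <> m ->
  Ediag k l t -> idat (t m).
Proof.
move=> kl lm km [ht [//|h]]; split; first exact: inB_atom.
by apply: h => // e; [apply: km | apply: lm].
Qed.

Lemma lhs_char (X : triple A -> Prop) (k l m : 'I_3) (s : triple A) :
  k <> l -> l <> m -> k <> m ->
  Tstar k (capB (Ediag k l) (Tstar l (capB (Ediag l m)
      (Tstar m (capB (Ediag m k) (Tstar k X)))))) s <-> Gchar X k l m s.
Proof.
move=> kl lm km; split.
- move=> [hs [t [[Et [_ [u [[Eu [_ [v [[Ev [_ [x [Xx [hx vx]]]]] [_ uv]]]]] [_ tu]]]]] [ht st]]]].
  have it := Ediag_id kl lm km Et.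
  have iu := Ediag_id (k:=l) (l:=m) (m:=k) lm (fun e => km (esym e)) (fun e => kl (esym e)) Eu.
  have iv := Ediag_id (k:=m) (l:=k) (m:=l) (fun e => km (esym e)) kl (fun e => lm (esym e)) Ev.
  have hu := Eu.1; have hv := Ev.1.
  have [Ft1 Ft2] := F (q:=k) (r:=l) ht it km lm (fun e => kl (esym e)).
  have [Fu1 Fu2] := F (q:=l) (r:=m) hu iu (fun e => kl (esym e)) (fun e => km (esym e)) (fun e => lm (esym e)).
  have [Fv1 Fv2] := F (q:=m) (r:=k) hv iv (fun e => lm (esym e)) kl km.
  rewrite /Gchar st; split => //; split => //.
  rewrite -Ft1 tu; split => //. rewrite -Fu1 uv; split => //.
  by exists x; rewrite -vx -Fv1.
- move=> [hs [[e1 [ie1 ht]] [[e2 [ie2 hu]] [[e3 [ie3 hv]] [x [Xx [hx xk]]]]]]].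
  have lk : l <> k by move=> e; apply: kl.
  have mk' : m <> k by move=> e; apply: km.
  have ml : m <> l by move=> e; apply: lm.
  split => //.
  exists (mk m k (s k) e1); split; last first.
    by split => //; rewrite (mk_q _ e1 km).
  split.
    split => //; right => m0 h1 h2.
    by rewrite (third lk mk' ml h1 h2) mk_p; case: ie1.
  split => //.
  exists (mk k l (other m (s k)) e2); split; last first.
    split => //; rewrite (mk_q _ e2 lk).
    by rewrite (mk_r _ e1 lm lk).
  split.
    split => //; right => m0 h1 h2.
    by rewrite (third ml kl km h1 h2) mk_p; case: ie2.
  split => //.
  exists (mk l m (other k (other m (s k))) e3); split; last first.
    split => //; rewrite (mk_q _ e3 ml).
    by rewrite (mk_r _ e2 mk' ml).
  split.
    split => //; right => m0 h1 h2.
    by rewrite (third km lm lk h1 h2) mk_p; case: ie3.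
  split => //.
  exists x; split => //; split => //.
  by rewrite (mk_r _ e3 kl km).
Qed.

Definition LI (v : A) := exists e, idat e /\ le v (cm e v).
Definition RI (v : A) := exists e, idat e /\ le v (cm v e).

Lemma inB_iff (s : triple A) : inB s <->
  [/\ is_atom (s i0), is_atom (s i1), is_atom (s i2) & le (s i1) (cm (s i2) (s i0))].
Proof.
split; first by case=> h1 h2; split.
case=> a0 a1 a2 h; split => // i; by have [->|[->|->]] := ord3 i.
Qed.

Lemma atom_nz (a : A) : is_atom a -> a <> bot. Proof. by case. Qed.

Lemma conv_le (x y z : A) : le x (cm y z) -> le (cv x) (cm (cv z) (cv y)).
Proof. by move/conv_mono; rewrite convM. Qed.

Lemma o0 v : other i0 v = v. Proof. by []. Qed.
Lemma o1 v : other i1 v = cv v. Proof. by []. Qed.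
Lemma o2 v : other i2 v = v. Proof. by []. Qed.

Lemma other_atom p v : is_atom v -> is_atom (other p v).
Proof. by rewrite /other; case: (p == i1) => //; apply: conv_atom. Qed.

Definition condN (p q : 'I_3) (v : A) : Prop :=
  if p == i0 then RI v else if p == i2 then LI v else if q == i0 then RI v else LI v.

Lemma cond_norm p q v : q <> p -> is_atom v -> (condp p q v <-> condN p q v).
Proof.
move=> qp av.
have [ep|[ep|ep]] := ord3 p; have [eq|[eq|eq]] := ord3 q; subst p q => //;
  rewrite /condN /condp /mk /= ?eii ?e01 ?e02 ?e10 ?e12 ?e20 ?e21 ?o0 ?o1 ?o2.
- split=> [[e [ie /inB_iff [_ _ _ h]]]|[e [ie h]]]; exists e; split => //.
  by apply/inB_iff; split => //; case: ie.
- split=> [[e [ie /inB_iff [_ _ _ h]]]|[e [ie h]]]; exists e; split => //.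
  by apply/inB_iff; split => //; case: ie.
- split=> [[e [ie /inB_iff [_ _ _ h]]]|[e [ie h]]]; exists e; split => //.
    by have := P1 h (atom_nz ie.1) av; rewrite convK.
  apply/inB_iff; split => //; [by case: ie| exact: conv_atom|].
  by apply: P1 h (atom_nz av) ie.1.
- split=> [[e [ie /inB_iff [_ _ _ h]]]|[e [ie h]]].
    exists (cv e); split; first exact: idat_cv.
    have := conv_le (P1 h (atom_nz ie.1) (conv_atom av)); by rewrite !convK.
  exists (cv e); split; first exact: idat_cv.
  apply/inB_iff; split => //; [exact: conv_atom| exact: (idat_cv ie).1|].
  have h' := conv_le h.
  by have := P1 h' (atom_nz (conv_atom av)) (idat_cv ie).1; rewrite convK.
- split=> [[e [ie /inB_iff [_ _ _ h]]]|[e [ie h]]]; exists e; split => //.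
  by apply/inB_iff; split => //; case: ie.
- split=> [[e [ie /inB_iff [_ _ _ h]]]|[e [ie h]]]; exists e; split => //.
  by apply/inB_iff; split => //; case: ie.
Qed.

Lemma LIcv v : LI (cv v) <-> RI v.
Proof.
split=> [[e [ie h]]|[e [ie h]]]; exists (cv e); split; try exact: idat_cv.
  by have := conv_le h; rewrite convK.
by have := conv_le h.
Qed.

Lemma RIcv v : RI (cv v) <-> LI v.
Proof.
split=> [[e [ie h]]|[e [ie h]]]; exists (cv e); split; try exact: idat_cv.
  by have := conv_le h; rewrite convK.
by have := conv_le h.
Qed.

Lemma Gchar_N (X : triple A -> Prop) (k l m : 'I_3) (s : triple A) :
  k <> l -> l <> m -> k <> m ->
  Gchar X k l m s <-> inB s /\ condN m k (s k) /\ condN k l (other m (s k)) /\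
    condN l m (other k (other m (s k))) /\
    exists x, X x /\ inB x /\ x k = other l (other k (other m (s k))).
Proof.
move=> kl lm km.
have lk : l <> k by move=> e; apply: kl.
have ml : m <> l by move=> e; apply: lm.
split=> -[hs [c1 [c2 [c3 hx]]]]; have a := inB_atom k hs;
  have b := other_atom m a; have c := other_atom k b;
  (split; [done | split; [|split; [|split]]] => //).
- by apply/(cond_norm km a).
- by apply/(cond_norm lk b).
- by apply/(cond_norm ml c).
- by apply/(cond_norm km a).
- by apply/(cond_norm lk b).
- by apply/(cond_norm ml c).
Qed.

Lemma cN01 v : condN i0 i1 v = RI v. Proof. by []. Qed.
Lemma cN02 v : condN i0 i2 v = RI v. Proof. by []. Qed.
Lemma cN10 v : condN i1 i0 v = RI v. Proof. by []. Qed.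
Lemma cN12 v : condN i1 i2 v = LI v. Proof. by []. Qed.
Lemma cN20 v : condN i2 i0 v = LI v. Proof. by []. Qed.
Lemma cN21 v : condN i2 i1 v = LI v. Proof. by []. Qed.

End WAfacts.

Theorem lemma7 (A : WA) (HA : is_WA A) (Hat : atomic A)
  (X : triple A -> Prop) (HX : forall s, X s -> inB s)
  (k l m : 'I_3) (Hkl : k <> l) (Hlm : l <> m) (Hkm : k <> m) :
  forall s : triple A,
    Tstar k (capB (Ediag k l) (Tstar l (capB (Ediag l m)
      (Tstar m (capB (Ediag m k) (Tstar k X)))))) s
    <->
    Tstar k (capB (Ediag k m) (Tstar m (capB (Ediag m l)
      (Tstar l (capB (Ediag l k) (Tstar k X)))))) s.
Proof.
move=> s.
have Hml : m <> l by move=> e; apply: Hlm.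
apply: iff_trans (lhs_char HA X s Hkl Hlm Hkm) _.
apply: iff_trans _ (iff_sym (lhs_char HA X s Hkm Hml Hkl)).
apply: iff_trans (Gchar_N HA X s Hkl Hlm Hkm) _.
apply: iff_trans _ (iff_sym (Gchar_N HA X s Hkm Hml Hkl)).
have hL := LIcv HA (s k); have hR := RIcv HA (s k).
move: hL hR; move: Hkl Hlm Hkm Hml; clear HX.
have [->|[->|->]] := ord3 k; have [->|[->|->]] := ord3 l;
have [->|[->|->]] := ord3 m; move=> *; try congruence;
  rewrite ?cN01 ?cN02 ?cN10 ?cN12 ?cN20 ?cN21 ?o0 ?o1 ?o2 ?convK; tauto.
Qed.
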